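(* For every integer $p\ge 3$, $$\mu(S_p^2)=\begin{cases}\frac{(p+1)^2}{4}, & p\text{ odd},\\ \frac{p(p+2)}{4}, & p\text{ even},\end{cases}\qquad \#\mu(S_p^2)=\begin{cases}\binom{p}{(p+1)/2}, & p\text{ odd},\\ \binom{p+1}{(p+2)/2}, & p\text{ even}.\end{cases}$$
   Context: For $p\ge3$, $n\ge1$, the Sierpiński graph $S_p^n$ has vertex set $\{0,1,\dots,p-1\}^n$, a vertex $(i_1,\dots,i_n)$ written $i_1\cdots i_n$; vertices $i_1\cdots i_n$ and $j_1\cdots j_n$ are adjacent iff there is $h\in\{1,\dots,n\}$ with $i_t=j_t$ for all $t<h$, $i_h\ne j_h$, and $i_t=j_h$, $j_t=i_h$ for all $t>h$. For $X\subseteq V(G)$, vertices $u,v$ are $X$-visible if there exists a shortest $u,v$-path $P$ with $V(P)\cap X\subseteq\{u,v\}$; $X$ is a mutual-visibility set if every two vertices of $X$ are $X$-visible; $\mu(G)$ is the maximum size of a mutual-visibility set, and $\#\mu(G)$ is the number of mutual-visibility sets of size $\mu(G)$. *)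

(* Defs.v *)
From mathcomp Require Import all_boot.
From mathcomp Require Import boolp.

Set Implicit Arguments.
Unset Strict Implicit.
Unset Printing Implicit Defensive.

Section Graphs.
Variable T : finType.
Variable e : rel T.

(* A u,v-walk: the vertex sequence u :: s, consecutive vertices adjacent,
   ending at v; its length is size s. *)
Definition walk (u v : T) (s : seq T) : bool := path e u s && (last u s == v).

Definition shortest_path (u v : T) (s : seq T) : Prop :=
  walk u v s /\ forall t, walk u v t -> size s <= size t.

Definition visible (X : {set T}) (u v : T) : Prop :=
  exists s, shortest_path u v s /\
    forall x, x \in u :: s -> x \in X -> x = u \/ x = v.

Definition mutual_visibility (X : {set T}) : Prop :=
  forall u v, u \in X -> v \in X -> visible X u v.

Definition mu : nat := \max_(X : {set T} | `[< mutual_visibility X >]) #|X|.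

Definition num_mu : nat :=
  #|[set X : {set T} | `[< mutual_visibility X >] && (#|X| == mu)]|.

End Graphs.

(* Sierpinski graph S_p^n: vertices are words i_1..i_n (indices 0..n-1 here)
   over {0,..,p-1}. *)
Definition Svert (p n : nat) := {ffun 'I_n -> 'I_p}.

Definition sierpinski_adj (p n : nat) : rel (Svert p n) :=
  fun x y => [exists h : 'I_n,
    (x h != y h) &&
    [forall t : 'I_n, ((t < h)%N ==> (x t == y t)) &&
                      ((h < t)%N ==> ((x t == y h) && (y t == x h)))]].

(* Main.v *)
Require Import Defs.
From mathcomp Require Import all_boot.
From mathcomp Require Import boolp.
From mathcomp Require Import zify.

Set Implicit Arguments.
Unset Strict Implicit.
Unset Printing Implicit Defensive.
Set Bullet Behavior "Strict Subproofs".

Section S.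
Variable p : nat.
Local Notation V := (Svert p 2).
Local Notation adj := (@sierpinski_adj p 2).

Definition o0 : 'I_2 := @Ordinal 2 0 isT.
Definition o1 : 'I_2 := @Ordinal 2 1 isT.
Definition f0 (x : V) := x o0.
Definition f1 (x : V) := x o1.
Definition mk (a b : 'I_p) : V := [ffun t : 'I_2 => if val t == 0 then a else b].

Lemma I2P (t : 'I_2) : t = o0 \/ t = o1.
Proof. case: t => [[|[|n]] Hn]; [left|right|]; try exact: val_inj. by []. Qed.

Lemma f0mk a b : f0 (mk a b) = a. Proof. by rewrite /f0 /mk ffunE. Qed.
Lemma f1mk a b : f1 (mk a b) = b. Proof. by rewrite /f1 /mk ffunE. Qed.

Lemma vP (x : V) : x = mk (f0 x) (f1 x).
Proof. apply/ffunP => t; rewrite ffunE; by case: (I2P t) => ->. Qed.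

Lemma mk_inj a b c d : mk a b = mk c d -> a = c /\ b = d.
Proof. move=> H; split; [have := f0mk a b | have := f1mk a b]; rewrite H ?f0mk ?f1mk //. Qed.

Lemma adjE a b c d : adj (mk a b) (mk c d) <->
  (a = c /\ b <> d) \/ (a <> c /\ b = c /\ d = a).
Proof.
rewrite /sierpinski_adj; split.
- move=> /existsP [h /andP [hne /forallP H]].
  have H0 := H o0; have H1 := H o1.
  case: (I2P h) => Eh; subst h; rewrite !ffunE /= in hne H0 H1 *.
  + right; move: H1 => /andP [/eqP -> /eqP ->]; split=> //; exact/eqP.
  + left; move: H0 => /andP [/eqP -> _]; split=> //; exact/eqP.
- case=> [[-> /eqP hb]|[/eqP ha [-> ->]]].
  + apply/existsP; exists o1; rewrite /mk !ffunE /= hb /=; apply/forallP => t.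
    case: (I2P t) => ->; by rewrite !ffunE /= ?eqxx.
  + apply/existsP; exists o0; rewrite /mk !ffunE /= ha /=; apply/forallP => t.
    case: (I2P t) => ->; by rewrite !ffunE /= ?eqxx.
Qed.


Lemma vP' (x : V) : exists a b, x = mk a b.
Proof. by exists (f0 x), (f1 x); apply: vP. Qed.

Lemma walk_nil (u v : V) : walk adj u v [::] = (u == v).
Proof. by []. Qed.
Lemma walk_cons (u v a : V) s : walk adj u v (a :: s) = adj u a && walk adj a v s.
Proof. by rewrite /walk /= andbA. Qed.

Lemma mkE a b c d : (mk a b == mk c d) = (a == c) && (b == d).
Proof.
apply/eqP/andP => [/mk_inj [-> ->]|[/eqP -> /eqP ->]] //.
Qed.

Ltac dec x := let E := fresh "E" in case: (vP' x) => ? [? E]; subst x.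
Ltac adjd H := move/adjE: H => [[? ?]|[? [? ?]]]; subst.

Lemma dist_lb i j k l t : i <> k -> walk adj (mk i j) (mk k l) t ->
  (j != k) + 1 + (l != i) <= size t.
Proof.
move=> ik; case: t => [|a [|b [|c t]]] /=.
- by rewrite walk_nil mkE => /andP [/eqP].
- rewrite walk_cons walk_nil => /andP [H /eqP E]; subst a.
  adjd H => //; by rewrite !eqxx.
- rewrite !walk_cons walk_nil => /andP [H1 /andP [H2 /eqP E]]; subst b.
  dec a; adjd H1; adjd H2; try done; by rewrite /= ?eqxx; repeat case: (_ != _).
- by move=> _; case: (j != k); case: (l != i).
Qed.


Definition direct i j k l : seq V :=
  (if j == k then [::] else [:: mk i k]) ++
  (if l == i then [:: mk k l] else [:: mk k i; mk k l]).

Lemma adjI1 a b d : b <> d -> adj (mk a b) (mk a d).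
Proof. by move=> H; apply/adjE; left. Qed.
Lemma adjI2 a c : a <> c -> adj (mk a c) (mk c a).
Proof. by move=> H; apply/adjE; right. Qed.

Lemma walk_direct i j k l : i <> k ->
  walk adj (mk i j) (mk k l) (direct i j k l) /\
  size (direct i j k l) = (j != k) + 1 + (l != i).
Proof.
move=> ik; rewrite /direct; case: eqP => jk; case: eqP => li; subst => /=;
  rewrite ?walk_cons walk_nil eqxx ?andbT; split => //.
- exact: adjI2.
- by rewrite adjI2 // adjI1 // => E; apply: li; rewrite E.
- by rewrite adjI1 // adjI2.
- by rewrite adjI1 // adjI2 // adjI1 // => E; apply: li; rewrite E.
Qed.

Lemma short_walk i j k l t : i <> k -> walk adj (mk i j) (mk k l) t ->
  size t <= (j != k) + 1 + (l != i) ->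
  t = direct i j k l \/ (j = l /\ j <> i /\ j <> k /\ t = [:: mk j i; mk j k; mk k l]).
Proof.
move=> ik; case: t => [|a [|b [|c t]]] /=.
- by rewrite walk_nil mkE => /andP [/eqP].
- rewrite walk_cons walk_nil => /andP [H /eqP E] _; subst a.
  left; adjd H => //; by rewrite /direct !eqxx.
- rewrite !walk_cons walk_nil => /andP [H1 /andP [H2 /eqP E]] _; subst b.
  left; dec a; adjd H1; adjd H2; try done; rewrite /direct;
  repeat (case: eqP => ?; try subst => //=).
- rewrite !walk_cons => /andP [H1 /andP [H2 /andP [H3 H4]]] Hs.
  have [jk li] : j <> k /\ l <> i by move: Hs; do 2 case: eqP => //.
  case: t H4 Hs => [|x t]; last by rewrite !addnS /= => _; case: (j != k); case: (l != i).
  rewrite walk_nil => /eqP E _; subst c.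
  dec a; dec b; adjd H1; adjd H2; adjd H3; try done.
  all: first [ by left; rewrite /direct; repeat (case: eqP => ? //)
             | by right; do !split => //; congruence ].
Qed.

End S.

Section K.
Variable p : nat.
Local Notation V := (Svert p 2).
Local Notation adj := (@sierpinski_adj p 2).

Lemma key (X : {set V}) i j k l : i <> k -> visible adj X (mk i j) (mk k l) ->
 ((j = k \/ mk i k \notin X) /\ (l = i \/ mk k i \notin X)) \/
 (j = l /\ j <> i /\ j <> k /\ mk j i \notin X /\ mk j k \notin X).
Proof.
move=> ik [s [[Hw Hmin] Hav]].
have [Hdw Hds] := walk_direct j l ik.
have Hle := Hmin _ Hdw; rewrite Hds in Hle.
case: (short_walk ik Hw Hle) => [Es | [jl [ji [jk Es]]]]; subst s.
- left; split.
  + case: (eqVneq j k) => [->|jk]; [by left|right].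
    apply/negP => Hin.
    have Hm : mk i k \in mk i j :: direct i j k l.
      by rewrite /direct (negbTE jk) !inE eqxx !orbT.
    case: (Hav _ Hm Hin) => /mk_inj [E1 E2].
    * by rewrite E2 eqxx in jk.
    * exact: ik.
  + case: (eqVneq l i) => [->|li]; [by left|right].
    apply/negP => Hin.
    have Hm : mk k i \in mk i j :: direct i j k l.
      by rewrite /direct (negbTE li) inE mem_cat !inE eqxx !orbT.
    case: (Hav _ Hm Hin) => /mk_inj [E1 E2].
    * by apply: ik.
    * by rewrite E2 eqxx in li.
- right; do 3 split => //; split; apply/negP => Hin.
  + have Hm : mk j i \in mk i j :: [:: mk j i; mk j k; mk k l] by rewrite !inE eqxx !orbT.
    by case: (Hav _ Hm Hin) => /mk_inj [E1 E2].
  + have Hm : mk j k \in mk i j :: [:: mk j i; mk j k; mk k l] by rewrite !inE eqxx !orbT.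
    by case: (Hav _ Hm Hin) => /mk_inj [E1 E2].
Qed.

End K.

Section L.
Variable p : nat.
Local Notation V := (Svert p 2).
Local Notation adj := (@sierpinski_adj p 2).

Definition std (S : {set 'I_p}) : {set V} :=
  [set x | (f0 x \in S) && ((f1 x \notin S) || (f1 x == f0 x))].

Lemma in_std S a b : (mk a b \in std S) = (a \in S) && ((b \notin S) || (b == a)).
Proof. by rewrite inE f0mk f1mk. Qed.

Lemma std_mv S : mutual_visibility adj (std S).
Proof.
move=> u v; case: (vP' u) => i [j ->]; case: (vP' v) => k [l ->].
rewrite !in_std => /andP [iS Hj] /andP [kS Hl].
case: (eqVneq i k) => [<-|ik].
- case: (eqVneq j l) => [<-|jl].
  + exists [::]; split; first by split => //; rewrite walk_nil.
    by move=> x; rewrite inE => /eqP -> _; left.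
  + exists [:: mk i l]; split.
    * split; first by rewrite walk_cons walk_nil eqxx adjI1 //; apply/eqP.
      case => [|? ?] //; rewrite walk_nil mkE eqxx /= => /eqP E.
      by rewrite E eqxx in jl.
    * by move=> x; rewrite !inE => /orP [] /eqP ->; [left|right].
- have ik' : i <> k by apply/eqP.
  have [Hdw Hds] := walk_direct j l ik'.
  exists (direct i j k l); split.
  + split => // t Ht; rewrite Hds; exact: dist_lb ik' Ht.
  + move=> x; rewrite inE /direct mem_cat => /orP [/eqP ->|/orP [H|H]]; first by left.
    * move: H; case: eqP => [_|jk] //; rewrite inE => /eqP -> .
      by rewrite in_std iS kS /= eq_sym (negbTE ik).
    * move: H; case: eqP => [->|li]; first by rewrite inE => /eqP ->; right.
      rewrite !inE => /orP [] /eqP ->; last by right.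
      by rewrite ?f0mk ?f1mk kS iS /= (negbTE ik).
Qed.

End L.

Section C.
Variable p : nat.
Local Notation V := (Svert p 2).
Local Notation adj := (@sierpinski_adj p 2).

Definition R (X : {set V}) i := [set j | mk i j \in X].

Definition mkp (q : 'I_p * 'I_p) : V := mk q.1 q.2.
Definition unmk (x : V) : 'I_p * 'I_p := (f0 x, f1 x).

Lemma cardX (X : {set V}) : #|X| = \sum_i #|R X i|.
Proof.
transitivity (\sum_i \sum_j (if mk i j \in X then 1 else 0)); last first.
  apply: eq_bigr => i _; rewrite -sum1_card [RHS]big_mkcond; apply: eq_bigr => j _.
  by rewrite inE.
rewrite pair_big /= -big_mkcond -sum1_card.
rewrite (reindex mkp) /=; first by [].
exists unmk => [[a b]|x] _; first by rewrite /unmk /mkp /= f0mk f1mk.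
by rewrite /unmk /mkp /= -vP.
Qed.


Lemma cardC (S : {set 'I_p}) : #|~: S| = p - #|S|.
Proof. have H := cardsC S; rewrite card_ord in H; lia. Qed.

Lemma R_std (S : {set 'I_p}) i : R (std S) i = if i \in S then i |: ~: S else set0.
Proof.
apply/setP => j; rewrite !inE f0mk f1mk; case: (i \in S) => /=; by rewrite !inE // orbC.
Qed.

Lemma card_std (S : {set 'I_p}) : #|std S| = #|S| * (p - #|S| + 1).
Proof.
rewrite cardX (eq_bigr (fun i => if i \in S then p - #|S| + 1 else 0)).
  by rewrite -big_mkcond sum_nat_const.
move=> i _; rewrite R_std; case: ifP => iS; last by rewrite cards0.
by rewrite cardsU1 cardC !inE iS /= addnC.
Qed.

End C.

Section M.
Variable p : nat.
Local Notation V := (Svert p 2).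
Local Notation adj := (@sierpinski_adj p 2).

Definition SS (X : {set V}) := [set i | R X i != set0].

Lemma SSP (X : {set V}) k : reflect (exists l, mk k l \in X) (k \in SS X).
Proof.
rewrite inE; apply: (iffP (set0Pn _)) => [[l]|[l]]; rewrite ?inE => H; by exists l; rewrite ?inE.
Qed.

Lemma RP (X : {set V}) i j : (j \in R X i) = (mk i j \in X).
Proof. by rewrite inE. Qed.

Lemma row_bound (X : {set V}) (HX : mutual_visibility adj X) i : i \in SS X ->
  #|R X i| <= p - #|SS X| + 1 /\
  (#|R X i| = p - #|SS X| + 1 -> 1 <= p - #|SS X| ->
     R X i = i |: ~: SS X \/ exists2 k, k \in SS X & #|R X k| < p - #|SS X| + 1).
Proof.
move=> iS.
have cU : #|i |: ~: SS X| = p - #|SS X| + 1.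
  by rewrite cardsU1 cardC in_setC iS /= addnC.
case: (boolP (R X i \subset i |: ~: SS X)) => [sub|nsub].
  have := subset_leqif_cards sub; rewrite cU => [[le eq]]; split => // E _.
  by left; apply/eqP; rewrite -eq E.
have [k kR kn] := subsetPn nsub.
move: kn; rewrite in_setU1 in_setC negb_or negbK => /andP [ki kS].
have ik : i <> k by move=> E; rewrite E eqxx in ki.
have kR' : mk i k \in X by rewrite -RP.
have [l0 kl0] := SSP _ _ kS.
have C1 : forall j, j \in R X i -> j != k ->
    [/\ j = l0, j <> i, j <> k, mk j i \notin X & mk j k \notin X].
{ move=> j jR jk; rewrite RP in jR; rewrite RP in kR.
  case: (key ik (HX _ _ jR kl0)) => [[[E|E] _]|[? [? [? [? ?]]]]].
  - by rewrite E eqxx in jk.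
  - by rewrite kR in E.
  - by split. }
have sub2 : R X i \subset [set k; l0].
  apply/subsetP => j jR; rewrite !inE; case: (eqVneq j k) => //= jk.
  by have [-> _ _ _ _] := C1 j jR jk.
have le2 : #|R X i| <= 2.
  by apply: (leq_trans (subset_leq_card sub2)); rewrite cards2; case: (_ != _).
case: (leqP #|R X i| 1) => [le1|gt1].
  split; first by apply: (leq_trans le1); rewrite addn1.
  by move=> E H; move: le1; rewrite E addn1 ltnS leqNgt H.
have : 0 < #|R X i :\ k| by move: gt1; rewrite (cardsD1 k) kR add1n ltnS.
rewrite card_gt0 => /set0Pn [j]; rewrite !inE => /andP [jk jR].
have jR' : j \in R X i by rewrite RP.
have [jl0 ji jkk nji nk] := C1 j jR' jk.
subst l0.
have jnS : j \notin SS X.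
  apply/negP => /SSP [l1 jl1].
  have ij : i <> j by move=> E; apply: ji.
{ case: (key ij (HX _ _ kR' jl1)) => [[[E|E] _]|[_ [_ [_ [_ nkj]]]]].
  - by move: jk; rewrite E eqxx.
  - by rewrite jR in E.
  - by rewrite kl0 in nkj. }
have t1 : 1 <= p - #|SS X|.
  by rewrite -cardC card_gt0; apply/set0Pn; exists j; rewrite inE.
split; first by apply: (leq_trans le2); rewrite addn1 ltnS.
move=> _ _; right; exists k => //.
have : R X k \subset [set j].
  apply/subsetP => l lR; rewrite !inE; rewrite RP in lR.
{ case: (key ik (HX _ _ jR lR)) => [[[E|E] _]|[-> _]].
  - by move: jk; rewrite E eqxx.
  - by rewrite kR' in E.
  - by []. }
move/subset_leq_card; rewrite cards1 => H; apply: (leq_ltn_trans H); by rewrite addn1 ltnS.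
Qed.

End M.
Lemma amgm a b : 4 * (a * b) <= (a + b)^2.
Proof. case: (leqP a b) => h. have [d ->] : exists d, b = a + d by exists (b - a); lia. nia.
have [d ->] : exists d, a = b + d by exists (a - b); lia. nia. Qed.
Lemma amgm_eq a b : 4 * (a * b) = (a + b)^2 -> a = b.
Proof. case: (leqP a b) => h. have [d ->] : exists d, b = a + d by exists (b - a); lia. nia.
have [d ->] : exists d, a = b + d by exists (a - b); lia. nia. Qed.
Lemma amgm_eq1 a b : 4 * (a * b) + 1 = (a + b)^2 -> a = b + 1 \/ b = a + 1.
Proof. case: (leqP a b) => h. have [d ->] : exists d, b = a + d by exists (b - a); lia. nia.
have [d ->] : exists d, a = b + d by exists (a - b); lia. nia. Qed.

Definition Mv p := if odd p then (p + 1) ^ 2 %/ 4 else p * (p + 2) %/ 4.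

Lemma pdec p : exists q, p = q.*2 + odd p.
Proof. exists p./2; by rewrite addnC odd_double_half. Qed.

Lemma Mv_odd q : Mv (q.*2.+1) = (q + 1) ^ 2.
Proof.
rewrite /Mv /= odd_double /=.
have -> : (q.*2.+1 + 1) ^ 2 = (q + 1) ^ 2 * 4 by rewrite -muln2; nia.
by rewrite mulnK.
Qed.

Lemma Mv_even q : Mv (q.*2) = q * (q + 1).
Proof.
rewrite /Mv odd_double /=.
have -> : q.*2 * (q.*2 + 2) = (q * (q + 1)) * 4 by rewrite -muln2; nia.
by rewrite mulnK.
Qed.

Lemma M_bound p s : s <= p -> s * (p - s + 1) <= Mv p.
Proof.
move=> sp; have A := @amgm s (p - s + 1).
have E : s + (p - s + 1) = p + 1 by lia.
rewrite E in A.
have [q Hq] := pdec p; move: Hq; case: (odd p) => /= Hq; rewrite ?addn0 ?addn1 in Hq; subst p.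
- rewrite Mv_odd. move: A; set x := s * _. rewrite -muln2; nia.
- rewrite Mv_even. move: A; set x := s * _. rewrite -muln2; nia.
Qed.

Lemma M_gt p : 3 <= p -> p < Mv p.
Proof.
have [q Hq] := pdec p; move: Hq; case: (odd p) => /= Hq; rewrite ?addn0 ?addn1 in Hq; subst p.
- rewrite Mv_odd -muln2; nia.
- rewrite Mv_even -muln2; nia.
Qed.

Lemma M_eq p s : s <= p -> (s * (p - s + 1) == Mv p) =
  (if odd p then s == (p + 1) %/ 2 else (s == p %/ 2) || (s == p %/ 2 + 1)).
Proof.
move=> sp; have A := @amgm s (p - s + 1).
have E : s + (p - s + 1) = p + 1 by lia.
have [q Hq] := pdec p; move: Hq; case: (odd p) => /= Hq; rewrite ?addn0 ?addn1 in Hq; subst p.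
- rewrite Mv_odd /= ?odd_double /=.
  have -> : (q.*2.+1 + 1) %/ 2 = q + 1.
    have -> : q.*2.+1 + 1 = (q + 1) * 2 by rewrite -muln2; lia.
    by rewrite mulnK.
  apply/eqP/eqP => [H|->].
  + have H1 := @amgm_eq s (q.*2.+1 - s + 1); rewrite E in H1.
    have : s = q.*2.+1 - s + 1 by apply: H1; rewrite H -muln2; nia.
    rewrite -muln2; lia.
  + rewrite -muln2; nia.
- rewrite Mv_even /= ?odd_double /=.
  have -> : q.*2 %/ 2 = q by rewrite -muln2 mulnK.
  apply/eqP/orP => [H|[/eqP Es|/eqP Es]]; try subst s.
  + have H1 := @amgm_eq1 s (q.*2 - s + 1); rewrite E in H1.
    have : s = q.*2 - s + 1 + 1 \/ q.*2 - s + 1 = s + 1 by apply: H1; rewrite H -muln2; nia.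
    move=> H2; have : s = q \/ s = q + 1 by rewrite -muln2 in H2 sp; lia.
    by case => ->; [left|right].
  + have -> : q.*2 - q + 1 = q + 1 by rewrite -muln2; lia.
    by [].
  + have -> : q.*2 - (q + 1) + 1 = q by move: sp; rewrite -!muln2; lia.
    by rewrite mulnC.
Qed.

Lemma std_inj p : injective (@std p).
Proof.
move=> S1 S2 E; apply/setP => i.
have : (mk i i \in std S1) = (mk i i \in std S2) by rewrite E.
by rewrite !in_std !eqxx !orbT !andbT.
Qed.

Theorem theorem3p1 (p : nat) : 3 <= p ->
  mu (@sierpinski_adj p 2) =
    (if odd p then (p + 1) ^ 2 %/ 4 else p * (p + 2) %/ 4) /\
  num_mu (@sierpinski_adj p 2) =
    (if odd p then 'C(p, (p + 1) %/ 2) else 'C(p + 1, (p + 2) %/ 2)).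
Proof.
move=> p3.
rewrite -/(Mv p).
have UB : forall X : {set Svert p 2}, mutual_visibility (@sierpinski_adj p 2) X ->
    #|X| <= Mv p /\ (#|X| = Mv p -> X = std (SS X) /\ #|SS X| * (p - #|SS X| + 1) = Mv p).
  move=> X HX.
  set S := SS X; set c := p - #|S| + 1.
  have sp : #|S| <= p by rewrite -[X in _ <= X]card_ord; exact: max_card.
  have HR0 : forall i, i \notin S -> R X i = set0 by move=> i; rewrite inE negbK => /eqP.
  have Hsum : #|X| = \sum_(i in S) #|R X i|.
    rewrite cardX (bigID (mem S)) /= [X in _ + X]big1 ?addn0 // => i iS.
    by rewrite HR0 // cards0.
  have Hle : forall i, i \in S -> #|R X i| <= c by move=> i iS; exact: (row_bound HX iS).1.
  have L := @leqif_sum _ (fun i => i \in S) (fun i => #|R X i| == c) (fun i => #|R X i|)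
     (fun _ => c) (fun i iS => leqif_eq (Hle i iS)).
  move: L; rewrite sum_nat_const -Hsum => -[L1 L2].
  have B := M_bound sp.
  split; first exact: leq_trans L1 B.
  move=> EM.
  have E1 : #|S| * c = Mv p by apply/eqP; rewrite eqn_leq B -EM L1.
  have allc : [forall (i | i \in S), #|R X i| == c] by rewrite -L2 EM E1.
  have t1 : 1 <= p - #|S|.
    case: (posnP (p - #|S|)) => [t0|//].
    have Sp : #|S| = p by lia.
    move: E1; rewrite /c t0 Sp muln1 => E1.
    by have := M_gt p3; rewrite -E1 ltnn.
  have rowE : forall i, i \in S -> R X i = i |: ~: S.
    move=> i iS; have [_ H] := row_bound HX iS.
    have ci : #|R X i| = c by apply/eqP; move/forall_inP: allc; apply.
    case: (H ci t1) => // [[k kS]].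
    by move/forall_inP: allc => /(_ k kS) /eqP ->; rewrite ltnn.
  split => //.
  apply/setP => x; case: (vP' x) => i [j ->].
  rewrite in_std -RP; case: (boolP (i \in S)) => iS /=.
    by rewrite rowE // in_setU1 in_setC orbC.
  by rewrite HR0 // inE.
have [S0 HS0] : exists S : {set 'I_p}, #|S| * (p - #|S| + 1) = Mv p.
  set s0 := if odd p then (p + 1) %/ 2 else p %/ 2.
  have s0p : s0 <= p by rewrite /s0; case: (odd p); lia.
  have : 0 < #|[set S : {set 'I_p} | #|S| == s0]| by rewrite card_draws card_ord bin_gt0.
  rewrite card_gt0 => /set0Pn [S]; rewrite inE => /eqP HS.
  exists S; apply/eqP; rewrite M_eq HS // /s0; by case: (odd p); rewrite eqxx.
have muE : mu (@sierpinski_adj p 2) = Mv p.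
  rewrite /mu; apply/eqP; rewrite eqn_leq; apply/andP; split.
    by apply/bigmax_leqP => X /asboolP HX; exact: (UB X HX).1.
  rewrite -HS0 -card_std.
  by apply: leq_bigmax_cond; apply/asboolP; exact: std_mv.
split => //.
rewrite /num_mu muE.
have -> : [set X | `[< mutual_visibility (@sierpinski_adj p 2) X >] && (#|X| == Mv p)] =
    (@std p) @: [set S : {set 'I_p} | #|S| * (p - #|S| + 1) == Mv p].
{ apply/setP => X; rewrite inE; apply/andP/imsetP.
  - case=> /asboolP HX /eqP EX; have [E1 E2] := (UB X HX).2 EX.
    by exists (SS X); [rewrite inE E2|].
  - case=> S; rewrite inE => /eqP HS ->; split; first by apply/asboolP; exact: std_mv.
    by rewrite card_std HS. }
rewrite card_imset; last exact: std_inj.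
have -> : [set S : {set 'I_p} | #|S| * (p - #|S| + 1) == Mv p] =
    [set S : {set 'I_p} | if odd p then #|S| == (p + 1) %/ 2
                         else (#|S| == p %/ 2) || (#|S| == p %/ 2 + 1)].
  apply/setP => S; rewrite !inE M_eq //.
  by rewrite -[X in _ <= X]card_ord max_card.
case Ho: (odd p).
  by rewrite card_draws card_ord.
have -> : [set S : {set 'I_p} | (#|S| == p %/ 2) || (#|S| == p %/ 2 + 1)] =
   [set S : {set 'I_p} | #|S| == p %/ 2] :|: [set S : {set 'I_p} | #|S| == p %/ 2 + 1].
  by apply/setP => S; rewrite !inE.
rewrite cardsU !card_draws card_ord.
have -> : [set S : {set 'I_p} | #|S| == p %/ 2] :&: [set S : {set 'I_p} | #|S| == p %/ 2 + 1] = set0.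
  apply/setP => S; rewrite !inE; case: (eqVneq #|S| (p %/ 2)) => // ->.
  by rewrite -{1}[p %/ 2]addn0 eqn_add2l.
rewrite cards0 subn0.
have [q Hq] := pdec p; rewrite Ho addn0 in Hq; subst p.
have -> : q.*2 %/ 2 = q by rewrite -muln2 mulnK.
have -> : (q.*2 + 2) %/ 2 = q.+1.
  have -> : q.*2 + 2 = q.+1 * 2 by rewrite -muln2; lia.
  by rewrite mulnK.
by rewrite !addn1 binS addnC.
Qed.
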